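(* Let $0\le\theta\le1$. (i) If $0\le\theta\le1/3$, then for every $\epsilon>0$ there exists a weighted digraph $D$ with $w(D)>0$ and $\theta(D)=\theta$ such that $\mathrm{mac}(D)<(1+\epsilon)\,l(\theta)\,w(D)$. (ii) If $1/3<\theta\le1$, then there exists a weighted digraph $D$ with $w(D)>0$ and $\theta(D)=\theta$ such that $\mathrm{mac}(D)=\theta\cdot w(D)$ $(=l(\theta)w(D))$.
   Context: A weighted digraph $D=(V,A,w)$ is a digraph without loops or parallel arcs (opposite arcs allowed) with weights $w:A\to\mathbb{R}_{\ge0}$; $w(D)$ is the total arc weight. For a partition $(X,Y)$ of $V$, $w(X,Y)$ is the total weight of arcs from $X$ to $Y$, and $\mathrm{mac}(D)=\max_{(X,Y)}w(X,Y)$. For $v\in V$, $r(v)=w^+(v)-w^-(v)$ (total weight leaving minus total weight entering $v$); $r^+(D)=\sum_{r(x)>0}r(x)$; $\theta(D)=r^+(D)/w(D)$. For $0\le\theta\le1$, $l(\theta)=\frac14+\frac{\theta^2}{4(1-2\theta)}$ if $\theta<1/3$ and $l(\theta)=\theta$ if $\theta\ge1/3$. *)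

(* Defs.v *)
From HB Require Import structures.
From mathcomp Require Import all_boot all_order all_algebra.
Set Implicit Arguments. Unset Strict Implicit. Unset Printing Implicit Defensive.
Import Order.TTheory GRing.Theory Num.Theory.
Local Open Scope ring_scope.

(* A weighted digraph on a finite vertex type V: w x y is the weight of the arc
   x -> y (weight 0 = no arc).
   Parallel arcs are impossible by construction; opposite arcs allowed. *)
Definition is_wdigraph (R : realFieldType) (V : finType) (w : V -> V -> R) : Prop :=
  (forall x, w x x = 0) /\ (forall x y, 0 <= w x y).

Definition wtot (R : realFieldType) (V : finType) (w : V -> V -> R) : R :=
  \sum_(x : V) \sum_(y : V) w x y.

Definition wcut (R : realFieldType) (V : finType) (w : V -> V -> R) (X : {set V}) : R :=
  \sum_(x in X) \sum_(y in ~: X) w x y.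

Definition mac (R : realFieldType) (V : finType) (w : V -> V -> R) : R :=
  \big[Num.max/0]_(X : {set V}) wcut w X.

Definition rdeg (R : realFieldType) (V : finType) (w : V -> V -> R) (v : V) : R :=
  \sum_(y : V) w v y - \sum_(x : V) w x v.

Definition rplus (R : realFieldType) (V : finType) (w : V -> V -> R) : R :=
  \sum_(x : V | 0 < rdeg w x) rdeg w x.

Definition thetaD (R : realFieldType) (V : finType) (w : V -> V -> R) : R :=
  rplus w / wtot w.

Definition lfun (R : realFieldType) (t : R) : R :=
  if t < 3^-1 then 4^-1 + t ^+ 2 / (4 * (1 - 2 * t)) else t.

(* Main.v *)
Require Import Defs.
From mathcomp Require Import all_boot all_order all_algebra.
From mathcomp Require Import reals.
From mathcomp Require Import ring lra.
Import Order.TTheory GRing.Theory Num.Theory.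
Local Open Scope ring_scope.

Section G.
Variable R : realType.
Variable n : nat.
Variables (be ga : R).

Definition gw (x y : bool * 'I_n) : R :=
  if x.1 == y.1 then (if x.2 == y.2 then 0 else be) else (if x.1 then ga else 0).

Lemma sum_split (P : pred (bool * 'I_n)) (F : bool * 'I_n -> R) :
  \sum_(x | P x) F x = \sum_(i | P (true,i)) F (true,i) + \sum_(i | P (false,i)) F (false,i).
Proof.
rewrite big_mkcond /=.
rewrite (eq_bigr (fun p => (fun b i => if P (b,i) then F (b,i) else 0) p.1 p.2)); last by case.
rewrite (eq_bigl (fun p => xpredT p.1 && xpredT p.2)) //.
rewrite -(pair_big xpredT xpredT (fun b i => if P (b,i) then F (b,i) else 0)).
by rewrite big_bool /= -!big_mkcond.
Qed.

Lemma sum_all (F : bool * 'I_n -> R) :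
  \sum_x F x = \sum_i F (true,i) + \sum_i F (false,i).
Proof. exact: (sum_split xpredT). Qed.

Lemma sumc (x : R) : \sum_(i < n) x = x * n%:R.
Proof. by rewrite sumr_const card_ord mulr_natr. Qed.

Lemma sum_ne (i : 'I_n) : \sum_j (if i == j then 0 else be) = be * (n.-1)%:R.
Proof.
rewrite (bigD1 i) //= eqxx add0r.
rewrite (eq_bigr (fun _ => be)); last by move=> j; rewrite eq_sym => /negbTE ->.
rewrite sumr_const.
have -> : #|[pred j | j != i]| = n.-1 by rewrite -[in RHS](card_ord n) -(cardC1 i).
by rewrite mulr_natr.
Qed.

Lemma outT i : \sum_y gw (true,i) y = be * (n.-1)%:R + ga * n%:R.
Proof.
rewrite sum_all /gw /= sum_ne; congr (_ + _).
exact: sumc.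
Qed.

Lemma outF i : \sum_y gw (false,i) y = be * (n.-1)%:R.
Proof.
rewrite sum_all /gw /= sum_ne big1 ?add0r //.
Qed.

Lemma inT i : \sum_x gw x (true,i) = be * (n.-1)%:R.
Proof.
rewrite sum_all /gw /= [X in _ + X]big1 // addr0.
under eq_bigr => j _ do rewrite eq_sym.
by rewrite sum_ne.
Qed.

Lemma inF i : \sum_x gw x (false,i) = be * (n.-1)%:R + ga * n%:R.
Proof.
rewrite sum_all /gw /= addrC.
under eq_bigr => j _ do rewrite eq_sym.
rewrite sum_ne; congr (_ + _).
exact: sumc.
Qed.

Lemma wtot_gw : wtot gw = 2 * be * n%:R * (n.-1)%:R + ga * n%:R ^+ 2.
Proof.
rewrite /wtot sum_all.
rewrite (eq_bigr (fun _ => be * (n.-1)%:R + ga * n%:R)); last by move=> i _; rewrite outT.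
rewrite [X in _ + X](eq_bigr (fun _ => be * (n.-1)%:R)); last by move=> i _; rewrite outF.
rewrite !sumc. ring.
Qed.

Lemma rdegT i : rdeg gw (true,i) = ga * n%:R.
Proof. by rewrite /rdeg outT inT; ring. Qed.
Lemma rdegF i : rdeg gw (false,i) = - (ga * n%:R).
Proof. by rewrite /rdeg outF inF; ring. Qed.

Lemma rplus_gw : 0 <= ga -> rplus gw = ga * n%:R ^+ 2.
Proof.
move=> hg; rewrite /rplus big_mkcond /= sum_all.
rewrite (eq_bigr (fun _ => if 0 < ga * n%:R then ga * n%:R else 0)); last by move=> i _; rewrite rdegT.
rewrite [X in _ + X](eq_bigr (fun _ => if 0 < - (ga * n%:R) then - (ga * n%:R) else 0)); last by move=> i _; rewrite rdegF.
have h0 : 0 <= ga * n%:R by apply: mulr_ge0.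
rewrite [X in _ + X]big1; last by move=> i _; rewrite oppr_gt0 ltNge h0.
rewrite addr0; case: ltP => h.
  by rewrite sumc; ring.
rewrite big1 //.
have -> : ga * n%:R ^+ 2 = ga * n%:R * n%:R by ring.
suff -> : ga * n%:R = 0 by rewrite mul0r.
by apply/le_anti; rewrite h h0.
Qed.

Lemma sumcP (P : pred 'I_n) (x : R) : \sum_(i | P i) x = x * #|P|%:R.
Proof. by rewrite sumr_const mulr_natr. Qed.

Lemma cardCX (X : {set bool * 'I_n}) b :
  #|[pred j | (b,j) \in ~: X]|%:R = n%:R - #|[pred j | (b,j) \in X]|%:R :> R.
Proof.
have E : (n%:R : R) = #|[pred j | (b,j) \in X]|%:R + #|[predC [pred j | (b,j) \in X]]|%:R.
  by rewrite -natrD cardC card_ord.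
rewrite E addrAC subrr add0r; congr (_%:R).
by apply: eq_card => j; rewrite !inE.
Qed.

Definition kk (X : {set bool * 'I_n}) b : R := #|[pred j | (b,j) \in X]|%:R.

Lemma wcut_gw (X : {set bool * 'I_n}) :
  wcut gw X = kk X true * (be * (n%:R - kk X true) + ga * (n%:R - kk X false))
            + kk X false * (be * (n%:R - kk X false)).
Proof.
rewrite /wcut sum_split.
rewrite (eq_bigr (fun _ => be * (n%:R - kk X true) + ga * (n%:R - kk X false))); last first.
  move=> i hi; rewrite sum_split.
  rewrite (eq_bigr (fun _ => be)); last first.
    move=> j; rewrite inE => hj; rewrite /gw /=.
    case: eqP => // ij; subst j; by rewrite hi in hj.
  rewrite [X in _ + X](eq_bigr (fun _ => ga)) // !sumcP !cardCX /kk; ring.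
rewrite [X in _ + X](eq_bigr (fun _ => be * (n%:R - kk X false))); last first.
  move=> i hi; rewrite sum_split.
  rewrite [X in X + _]big1 ?add0r //.
  rewrite (eq_bigr (fun _ => be)); last first.
    move=> j; rewrite inE => hj; rewrite /gw /=.
    case: eqP => // ij; subst j; by rewrite hi in hj.
  by rewrite sumcP cardCX.
rewrite !sumcP /kk; ring.
Qed.


Lemma kk_ge0 X b : 0 <= kk X b.
Proof. exact: ler0n. Qed.
Lemma kk_le X b : kk X b <= n%:R.
Proof. by rewrite /kk ler_nat -[X in (_ <= X)%N]card_ord max_card. Qed.

Lemma gw_ok : 0 <= be -> 0 <= ga -> is_wdigraph gw.
Proof.
move=> hb hg; split; first by move=> x; rewrite /gw !eqxx.
by move=> x y; rewrite /gw; do 2 case: ifP => //.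
Qed.

End G.

Lemma lfun_le {R : realType} (t : R) : t <= 3^-1 -> lfun t = (1-t)^+2 / (4 * (1 - 2*t)).
Proof.
move=> h; rewrite /lfun; case: ifP => h2.
  by field; apply/lt0r_neq0; lra.
have -> : t = 3^-1 by apply/le_anti; rewrite h leNgt h2.
by field.
Qed.

Lemma predN (R : realType) (m : nat) : ((m.+2).-1)%:R = (m.+2)%:R - 1 :> R.
Proof. by rewrite /= -[(m.+2)%N]addn1 natrD addrK. Qed.

Lemma part1 (R : realType) (t : R) (ht0 : 0 <= t) (h3 : t <= 3^-1) (eps : R) (he : 0 < eps) :
  exists (V : finType) (w : V -> V -> R),
    [/\ is_wdigraph w, 0 < wtot w, thetaD w = t &
        mac w < (1 + eps) * lfun t * wtot w].
Proof.
set m := Num.Def.archi_bound ((1 + eps) / eps).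
have hm : (1 + eps) / eps < m%:R by apply: archi_boundP; apply: divr_ge0; lra.
set nr : R := (m.+2)%:R.
have hnr : nr = m%:R + 2 by rewrite /nr -[(m.+2)%N]addn2 natrD.
have hm0 : 0 <= m%:R :> R := ler0n _ _.
have hen : 1 + eps < eps * nr.
  have := hm; rewrite ltr_pdivrMr // => h; rewrite hnr; nra.
set g : R := 2 * t * (nr - 1) / (nr * (1 - t)).
have hg0 : 0 <= g by rewrite /g; apply: divr_ge0; [apply: mulr_ge0; lra | apply: mulr_ge0; lra].
have hg1 : g <= 1.
  rewrite /g ler_pdivrMr; last by apply: mulr_gt0; lra.
  nra.
exists (bool * 'I_(m.+2))%type, (gw R (m.+2) 1 g).
have hW : wtot (gw R (m.+2) 1 g) = 2 * nr * (nr - 1) + g * nr ^+ 2.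
  by rewrite wtot_gw predN -/nr; ring.
have hW0 : 0 < wtot (gw R (m.+2) 1 g) by rewrite hW; nra.
split.
- by apply: gw_ok.
- done.
- rewrite /thetaD rplus_gw // -/nr.
  have -> : g * nr ^+ 2 = t * wtot (gw R (m.+2) 1 g).
    rewrite hW /g; field; apply/andP; split; apply/lt0r_neq0; lra.
  by rewrite mulfK //; apply/lt0r_neq0.
have hL := lfun_le t h3.
have Mb : mac (gw R (m.+2) 1 g) <= nr ^+ 2 / (2 - g).
  rewrite /mac; apply: bigmax_le; first by apply: divr_ge0; [nra | lra].
  move=> X _; rewrite wcut_gw -/nr.
  set a := kk R (m.+2) X true; set b := kk R (m.+2) X false.
  rewrite ler_pdivlMr; last lra.
  set XX := (2 - g) * a - nr; set YY := (2 - g) * b - nr * (1 - g).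
  have hid : (2 - g) * nr ^+ 2 - (2 - g) ^+ 2 * (a * (1 * (nr - a) + g * (nr - b)) + b * (1 * (nr - b)))
             = (XX + g * YY / 2) ^+ 2 + (1 - g ^+ 2 / 4) * YY ^+ 2.
    by rewrite /XX /YY; field.
  have h1 : 0 <= (XX + g * YY / 2) ^+ 2 := sqr_ge0 _.
  have h2 : 0 <= (1 - g ^+ 2 / 4) * YY ^+ 2 by apply: mulr_ge0; [nra | apply: sqr_ge0].
  have h2g : 0 < 2 - g by lra.
  have hf : (2 - g) ^+ 2 * (a * (1 * (nr - a) + g * (nr - b)) + b * (1 * (nr - b))) <= (2 - g) * nr ^+ 2.
    by rewrite -subr_ge0 hid; apply: addr_ge0.
  rewrite -(ler_pM2l h2g); nra.
apply: (le_lt_trans Mb).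
rewrite ltr_pdivrMr; last lra.
have hK : (1 + eps) * lfun t * wtot (gw R (m.+2) 1 g) * (2 - g)
          = (1 + eps) * ((nr + t / (1 - 2 * t)) * (nr - 1)).
  rewrite hL hW /g; field; apply/and3P; split; apply/lt0r_neq0; lra.
rewrite hK.
have hs : 0 <= t / (1 - 2 * t) by apply: divr_ge0; lra.
nra.
Qed.

Lemma part2 (R : realType) (t : R) (ht1 : t <= 1) (h3 : 3^-1 < t) :
  exists (V : finType) (w : V -> V -> R),
    [/\ is_wdigraph w, 0 < wtot w, thetaD w = t & mac w = t * wtot w].
Proof.
have ht3 : 0 < 3 * t - 1 by lra.
set m := Num.Def.archi_bound (2 * t / (3 * t - 1)).
have hm : 2 * t / (3 * t - 1) < m%:R by apply: archi_boundP; apply: divr_ge0; lra.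
set nr : R := (m.+2)%:R.
have hnr : nr = m%:R + 2 by rewrite /nr -[(m.+2)%N]addn2 natrD.
have hm0 : 0 <= m%:R :> R := ler0n _ _.
have hnt : 2 * t <= nr * (3 * t - 1).
  have := hm; rewrite ltr_pdivrMr // => h; rewrite hnr; nra.
set be : R := nr * (1 - t) / (2 * t * (nr - 1)).
have hb0 : 0 <= be by rewrite /be; apply: divr_ge0; [apply: mulr_ge0; lra | apply: mulr_ge0; lra].
have hb1 : be <= 1.
  rewrite /be ler_pdivrMr; last by apply: mulr_gt0; lra.
  nra.
exists (bool * 'I_(m.+2))%type, (gw R (m.+2) be 1).
have hW : wtot (gw R (m.+2) be 1) = 2 * be * nr * (nr - 1) + 1 * nr ^+ 2.
  by rewrite wtot_gw predN -/nr.
have hWt : t * wtot (gw R (m.+2) be 1) = nr ^+ 2.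
  rewrite hW /be; field; apply/andP; split; apply/lt0r_neq0; lra.
have hW0 : 0 < wtot (gw R (m.+2) be 1) by rewrite hW; nra.
have hmac : mac (gw R (m.+2) be 1) = nr ^+ 2.
  apply/le_anti/andP; split.
    rewrite /mac; apply: bigmax_le; first by nra.
    move=> X _; rewrite wcut_gw -/nr.
    have := kk_ge0 R (m.+2) X true; have := kk_le R (m.+2) X true.
    have := kk_ge0 R (m.+2) X false; have := kk_le R (m.+2) X false.
    rewrite -/nr.
    set a := kk R (m.+2) X true; set b := kk R (m.+2) X false => hb1' hb0' ha1 ha0.
    have e1 : 0 <= (1 - be) * ((nr - a) * (nr - b)) by apply: mulr_ge0; [lra | apply: mulr_ge0; lra].
    have e2 : 0 <= (1 - be) * (b * nr) by apply: mulr_ge0; [lra | apply: mulr_ge0; lra].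
    have e3 : 0 <= be * ((nr - a - b / 2) ^+ 2 + 3 / 4 * b ^+ 2).
      by apply: mulr_ge0 => //; apply: addr_ge0; [apply: sqr_ge0 | apply: mulr_ge0; [lra|apply: sqr_ge0]].
    have hid : nr ^+ 2 - (a * (be * (nr - a) + 1 * (nr - b)) + b * (be * (nr - b)))
       = (1 - be) * ((nr - a) * (nr - b)) + (1 - be) * (b * nr) + be * ((nr - a - b / 2) ^+ 2 + 3 / 4 * b ^+ 2).
      by field.
    rewrite -subr_ge0 hid; apply: addr_ge0; [apply: addr_ge0|]; done.
  rewrite /mac.
  apply: le_trans (le_bigmax _ _ [set x : bool * 'I_(m.+2) | x.1]).
  rewrite wcut_gw.
  have -> : kk R m.+2 [set x : bool * 'I_(m.+2) | x.1] true = nr.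
    by rewrite /kk /nr; congr (_%:R); rewrite -[RHS](card_ord m.+2); apply: eq_card => j; rewrite !inE.
  have -> : kk R m.+2 [set x : bool * 'I_(m.+2) | x.1] false = 0.
    by rewrite /kk; apply/eqP; rewrite pnatr_eq0; apply/eqP; apply: eq_card0 => j; rewrite !inE.
  by rewrite -/nr le_eqVlt; apply/orP; left; apply/eqP; ring.
split => //.
- by apply: gw_ok => //; lra.
- rewrite /thetaD rplus_gw ?ler01 // mul1r -hWt.
  by rewrite mulfK //; apply/lt0r_neq0.
- by rewrite hmac hWt.
Qed.

Theorem mainTheorem8 (R : realType) (t : R) (ht0 : 0 <= t) (ht1 : t <= 1) :
  (t <= 3^-1 ->
    forall eps : R, 0 < eps ->
      exists (V : finType) (w : V -> V -> R),
        [/\ is_wdigraph w, 0 < wtot w, thetaD w = t &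
            mac w < (1 + eps) * lfun t * wtot w]) /\
  (3^-1 < t ->
      exists (V : finType) (w : V -> V -> R),
        [/\ is_wdigraph w, 0 < wtot w, thetaD w = t &
            mac w = t * wtot w]).
Proof.
split; first by move=> h eps he; apply: part1.
by move=> h; apply: part2.
Qed.
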